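(* Let $F$ be a field, $U,V$ finite-dimensional $F$-vector spaces, $A:U\times U\to V$ an alternating bilinear map whose image spans $V$, $u_1<\dots<u_n$ an ordered basis of $U$, and $\mathcal{B}$, $\mathcal{W}(\mathcal{B})$, $f$, $W(\mathcal{B})$ as in the context. Then (i) the elements $f(\{a,b,c\})$, $\{a,b,c\}\in\mathcal{W}(\mathcal{B})$, are linearly independent in $V\otimes U$ (in particular they are pairwise distinct); and (ii) $f:\mathcal{W}(\mathcal{B})\to W(\mathcal{B})$ is a bijection.
   Context: $\mathcal{Y}$ is the set of $2$-element subsets of $\{1,\dots,n\}$, totally ordered by $\{i,j\}<\{r,s\}$ iff $\max\{i,j\}<\max\{r,s\}$, or the maxima are equal to $a$ and the remaining element of $\{i,j\}\setminus\{a\}$ is smaller than that of $\{r,s\}\setminus\{a\}$. $\mathcal{B}$ is constructed as follows: $\mathcal{B}_0=B_0=\emptyset$; inductively let $\{i,j\}$ ($i<j$) be the least element of $\mathcal{Y}$ with $A(u_i,u_j)\notin\operatorname{span}(B_k)$, and set $\mathcal{B}_{k+1}=\mathcal{B}_k\cup\{\{i,j\}\}$, $B_{k+1}=B_k\cup\{A(u_i,u_j)\}$; stop at $k=m=\dim V$ and put $\mathcal{B}=\mathcal{B}_m$. $\Psi:U\otimes_F U\otimes_F U\to V\otimes_F U$ is the linear map with $\Psi(x\otimes y\otimes z)=A(x,y)\otimes z+A(y,z)\otimes x+A(z,x)\otimes y$. $\mathcal{W}(\mathcal{B})$ is the set of $3$-element subsets of $\{1,\dots,n\}$ containing some $2$-element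 subset belonging to $\mathcal{B}$. For $\{a,b,c\}\in\mathcal{W}(\mathcal{B})$ with elements listed as $i<j<k$, $f(\{a,b,c\})=\Psi(u_i\otimes u_j\otimes u_k)$; $W(\mathcal{B})=f(\mathcal{W}(\mathcal{B}))$. *)

(* Defs.v *)
From HB Require Import structures.
From mathcomp Require Import all_boot all_order all_algebra.
Set Implicit Arguments. Unset Strict Implicit. Unset Printing Implicit Defensive.
Import GRing.Theory.
Local Open Scope ring_scope.

(* Tensor product V (x)_F U, modelled canonically (finite dimension) as
   'Hom(U^*, V), where U^* = 'Hom(U, F^o).  x (x) z  is  phi |-> phi z *: x. *)
Section Tensor.
Variables (F : fieldType) (U V : vectType F).
Definition tensVU := 'Hom('Hom(U, F^o), V).
Definition tens (x : V) (z : U) : tensVU :=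
  linfun (fun phi : 'Hom(U, F^o) => (phi z : F) *: x).
End Tensor.

Section Construction.
Variables (F : fieldType) (U V : vectType F) (A : U -> U -> V) (n : nat)
          (u : n.-tuple U).

Definition Psi (x y z : U) : tensVU U V :=
  tens (A x y) z + tens (A y z) x + tens (A z x) y.

(* The set Y of 2-subsets {i,j}, i<j, listed as pairs (i,j) in the order of Y:
   first by the maximum j, then by the remaining element i. *)
Definition Ylist : seq ('I_n * 'I_n) :=
  flatten [seq [seq (i, j) | i <- filter (fun i : 'I_n => (i < j)%N) (enum 'I_n)]
          | j : 'I_n <- enum 'I_n].

Definition Aval (p : 'I_n * 'I_n) : V := A (u`_p.1) (u`_p.2).

Definition Bstep (Bs : seq ('I_n * 'I_n)) : seq ('I_n * 'I_n) :=
  match [seq p <- Ylist | Aval p \notin <<map Aval Bs>>%VS] with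
  | p :: _ => rcons Bs p
  | [::] => Bs
  end.

Definition calB : seq ('I_n * 'I_n) := iter (\dim (fullv : {vspace V})) Bstep [::].

Definition calW : {set {set 'I_n}} :=
  [set X : {set 'I_n} | (#|X| == 3)%N &&
     has (fun p : 'I_n * 'I_n => (p.1 \in X) && (p.2 \in X)) calB].

(* f({a,b,c}) = Psi(u_i (x) u_j (x) u_k) with i<j<k the elements listed *)
Definition fW (T : {set 'I_n}) : tensVU U V :=
  let s := [seq u`_i | i : 'I_n <- enum T] in Psi s`_0 s`_1 s`_2.

Definition WB : seq (tensVU U V) := [seq fW X | X in calW].
End Construction.

(* Main.v *)
Require Import Defs.
From HB Require Import structures.
From mathcomp Require Import all_boot all_order all_algebra zify.
Set Implicit Arguments. Unset Strict Implicit. Unset Printing Implicit Defensive.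
Import GRing.Theory.
Local Open Scope ring_scope.

Lemma filter_head (T : eqType) (a : pred T) (s : seq T) p r :
  filter a s = p :: r ->
  [/\ p \in s, a p & forall q, q \in take (index p s) s -> ~~ a q].
Proof.
elim: s => //= x s IH.
case ax: (a x).
  by case=> <- _; rewrite eqxx inE eqxx ax; split=> // q.
move=> /IH [ps ap H]; have xp : (x == p) = false.
  by apply/negbTE; apply/eqP=> ex; rewrite ex ap in ax.
rewrite xp /= inE ps orbT; split=> // q; rewrite inE => /orP[/eqP->|]; first by rewrite ax.
exact: H.
Qed.

Section Greedy.
Variables (F : fieldType) (U V : vectType F) (A : U -> U -> V) (n : nat)
          (u : n.-tuple U).
Local Notation Y := (Ylist n).
Local Notation av := (Aval A u).

Definition Inv (Bs : seq ('I_n * 'I_n)) :=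
  (forall P, P \in Bs -> P \in Y /\ av P \notin <<map av (take (index P Y) Y)>>%VS)
  /\ exists k, <<map av Bs>>%VS = <<map av (take k Y)>>%VS.

Lemma Inv_step Bs : Inv Bs -> Inv (Bstep A u Bs).
Proof.
move=> [H1 [k Hk]]; rewrite /Bstep.
case E: [seq p <- Y | av p \notin <<map av Bs>>%VS] => [|p r]; first by split=> //; exists k.
have [pY /= pn Hq] := filter_head E.
set i := index p Y.
have sub1 : (<<map av (take i Y)>> <= <<map av Bs>>)%VS.
  apply/span_subvP=> v /mapP[q qin ->]; have := Hq q qin; by rewrite negbK.
have iY : (i < size Y)%N by rewrite index_mem.
have ki : (k <= i)%N.
  rewrite leqNgt; apply/negP=> ik; move: pn; rewrite Hk memv_span //.
  apply: map_f; rewrite -(nth_index p pY) -/i.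
  rewrite -(nth_take p ik); by apply: mem_nth; rewrite size_take; case: ifP.
have sub2 : (<<map av Bs>> <= <<map av (take i Y)>>)%VS.
  rewrite Hk; apply: sub_span => v /mapP[q qin ->]; apply: map_f.
  by rewrite -(take_takel _ ki) in qin; apply: mem_take qin.
have eqs : <<map av Bs>>%VS = <<map av (take i Y)>>%VS.
  by apply/eqP; rewrite eqEsubv sub2 sub1.
split.
  move=> P; rewrite mem_rcons inE => /orP[/eqP->|]; last exact: H1.
  by split=> //; rewrite -eqs.
exists i.+1; rewrite (take_nth p); last by rewrite index_mem.
rewrite nth_index // !map_rcons -!cats1 !span_cat eqs //.
Qed.
End Greedy.
Section Ord.
Variable n : nat.
Local Notation Y := (Ylist n).
Definition ltY (p q : 'I_n * 'I_n) :=
  (p.2 < q.2)%N || (((p.2 : nat) == q.2) && (p.1 < q.1)%N).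

Lemma memY p : (p \in Y) = (p.1 < p.2)%N.
Proof.
apply/flatten_mapP/idP => [[j _ /mapP[i]]|lt12].
  by rewrite mem_filter => /andP[h _] ->.
exists p.2; first by rewrite mem_enum.
by apply/mapP; exists p.1; [rewrite mem_filter mem_enum lt12| case: p {lt12}].
Qed.

Lemma enum_pw : pairwise (fun a b : 'I_n => (a < b)%N) (enum 'I_n).
Proof.
have := iota_ltn_sorted 0 n; rewrite -val_enum_ord sorted_pairwise; last exact: ltn_trans.
by rewrite pairwise_map.
Qed.

Lemma pw_flat (e : seq 'I_n) : pairwise (fun a b : 'I_n => (a < b)%N) e ->
  pairwise ltY (flatten [seq [seq (i, j) | i <- filter (fun i : 'I_n => (i < j)%N) (enum 'I_n)]
          | j : 'I_n <- e]).
Proof.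
elim: e => //= j e IH /andP[hj he]; rewrite pairwise_cat IH // andbT.
apply/andP; split.
  apply/allrelP => x y /mapP[i _ ->] /flatten_mapP[j' j'e /mapP[i' _ ->]].
  by rewrite /ltY /= (allP hj j' j'e).
rewrite pairwise_map; apply: pairwise_filter.
apply: sub_pairwise enum_pw => a b /= ab; by rewrite /ltY /= eqxx ab orbT.
Qed.

Lemma pwY : pairwise ltY Y.
Proof. exact: pw_flat enum_pw. Qed.

Lemma ltY_irr p : ltY p p = false.
Proof. by rewrite /ltY ltnn eqxx ltnn. Qed.

Lemma ltY_asym p q : ltY p q -> ltY q p -> False.
Proof. rewrite /ltY => /orP[h|/andP[/eqP h h']] /orP[g|/andP[/eqP g g']]; lia. Qed.

Lemma ltY_take q P : q \in Y -> P \in Y -> ltY q P -> q \in take (index P Y) Y.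
Proof.
move=> qY PY qP; set j := index P Y; set m := index q Y.
have mY : (m < size Y)%N by rewrite index_mem.
have jY : (j < size Y)%N by rewrite index_mem.
case: (ltnP m j) => [mj|jm].
  rewrite -(nth_index q qY) -/m -(nth_take q mj); apply: mem_nth.
  by rewrite size_take; case: ifP.
move: jm; rewrite leq_eqVlt => /orP[/eqP jm|jm].
  have : P = q by rewrite -(nth_index q qY) -/m -jm /j nth_index.
  by move=> e; rewrite e ltY_irr in qP.
have := (pairwiseP q pwY) j m jY mY jm.
rewrite (set_nth_default P) // nth_index // nth_index // => Pq.
by case: (ltY_asym qP Pq).
Qed.
End Ord.
Section T.
Variables (F : fieldType) (U V : vectType F).
Definition tensf (x : V) (z : U) := fun phi : 'Hom(U, F^o) => (phi z : F) *: x.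
Fact tensf_lin x z : linear (tensf x z).
Proof. by move=> a f g; rewrite /tensf add_lfunE scale_lfunE scalerDl scalerA. Qed.
HB.instance Definition _ x z := GRing.isLinear.Build F _ _ _ (tensf x z) (tensf_lin x z).
Lemma tensE (x : V) (z : U) phi : tens x z phi = (phi z : F) *: x.
Proof. by rewrite /tens -/(tensf x z) lfunE. Qed.

Variables (n : nat) (u : n.-tuple U).
Definition phl (l : 'I_n) : 'Hom(U, F^o) := linfun (coord u l : U -> F^o).
Lemma phlE l (m : 'I_n) : free u -> phl l (u`_m) = (m == l)%:R.
Proof. move=> fu; rewrite /phl lfunE /=. by rewrite coord_free. Qed.
End T.

Section Main.
Variables (F : fieldType) (U V : vectType F) (A : U -> U -> V).
Hypothesis HAl : forall (x : U) (a : F) (y z : U), A (a *: y + z) x = a *: A y x + A z x.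
Hypothesis HAr : forall (x : U) (a : F) (y z : U), A x (a *: y + z) = a *: A x y + A x z.
Hypothesis Halt : forall x : U, A x x = 0.
Variables (n : nat) (u : n.-tuple U).
Hypothesis fu : free u.

Lemma Aanti x y : A y x = - A x y.
Proof.
have AlD a b c : A (a + b) c = A a c + A b c by have := HAl c 1 a b; rewrite !scale1r.
have ArD a b c : A c (a + b) = A c a + A c b by have := HAr c 1 a b; rewrite !scale1r.
have := Halt (x + y); rewrite AlD !ArD !Halt add0r addr0 => /eqP.
by rewrite addr_eq0 => /eqP ->; rewrite opprK.
Qed.

Definition wt (X : {set 'I_n}) : nat := (\sum_(z in X) 2 ^ z)%N.

Lemma fW_eval (X : {set 'I_n}) (l : 'I_n) : #|X| = 3%N ->
  (l \notin X -> fW A u X (phl u l) = 0) /\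
  (l \in X -> exists x y : 'I_n, [/\ [&& x != y, x != l & y != l],
     (forall z, (z \in X) = [|| z == x, z == y | z == l]),
     wt X = (2 ^ x + 2 ^ y + 2 ^ l)%N & fW A u X (phl u l) = A u`_x u`_y]).
Proof.
move=> X3; have := enum_uniq (mem X); have := mem_enum (mem X).
have : size (enum X) = 3%N by rewrite -cardE.
rewrite /wt -big_enum /fW.
case: (enum X) => [|e0 [|e1 [|e2 [|]]]] //= _ memX.
rewrite !inE !negb_or => /and3P[/andP[n01 n02] n12 _].
rewrite big_cons big_cons big_cons big_nil.
rewrite /Psi !add_lfunE !tensE !phlE //.
have mX z : (z \in X) = [|| z == e0, z == e1 | z == e2] by move: (memX z); rewrite !inE.
rewrite mX (eq_sym e0) (eq_sym e1) (eq_sym e2).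
split.
  rewrite !negb_or => /and3P[a b c].
  by rewrite (negbTE a) (negbTE b) (negbTE c) !scale0r !addr0.
move=> /or3P[] /eqP le; subst l.
- exists e1, e2; split.
  + by rewrite n12 eq_sym n01 eq_sym n02.
  + by move=> z; rewrite mX; case: (z == e0); case: (z == e1); case: (z == e2).
  + lia.
  rewrite eqxx (negbTE n01) (negbTE n02) scale1r !scale0r.
  by rewrite addr0 add0r.
- exists e2, e0; split.
  + by rewrite eq_sym n02 eq_sym n12 n01.
  + by move=> z; rewrite mX; case: (z == e0); case: (z == e1); case: (z == e2).
  + lia.
  rewrite eqxx (eq_sym e1 e0) (negbTE n01) (negbTE n12) scale1r !scale0r.
  by rewrite addr0 add0r.
- exists e0, e1; split.
  + by rewrite n01 n02 n12.
  + by move=> z; rewrite mX; case: (z == e0); case: (z == e1); case: (z == e2).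
  + lia.
  rewrite eqxx (eq_sym e2 e0) (eq_sym e2 e1) (negbTE n02) (negbTE n12) scale1r !scale0r.
  by rewrite addr0 addr0.
Qed.

Lemma calB_inv : Inv A u (calB A u).
Proof.
rewrite /calB; elim: (\dim (fullv : {vspace V})) => [|m IH] /=; last exact: Inv_step.
rewrite /Inv; split; first by move=> P; rewrite in_nil.
by exists 0%N; rewrite take0.
Qed.

Lemma pow2_lt (a b c d : nat) : (a < b)%N -> (c < d)%N -> (2 ^ a + 2 ^ b <= 2 ^ c + 2 ^ d)%N ->
  ~~ ((a == c) && (b == d)) -> (b < d)%N || ((b == d) && (a < c)%N).
Proof.
move=> ab cd le ne; case: (ltngtP b d) => // [db|bd].
  have h1 : (2 ^ c < 2 ^ d)%N by rewrite ltn_exp2l.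
  have h2 : (2 ^ d.+1 <= 2 ^ b)%N by rewrite leq_exp2l.
  rewrite expnS in h2; lia.
subst d; rewrite ?eqxx ?ltnn /=; case: (ltngtP a c) => // [ca|ac].
  have : (2 ^ c < 2 ^ a)%N by rewrite ltn_exp2l.
  lia.
by subst; rewrite !eqxx in ne.
Qed.

Lemma inS (p : 'I_n * 'I_n) (a b : 'I_n) : p \in Ylist n -> a != b ->
  (2 ^ a + 2 ^ b <= 2 ^ p.1 + 2 ^ p.2)%N ->
  ~~ [|| (a == p.1) && (b == p.2) | (a == p.2) && (b == p.1)] ->
  A u`_a u`_b \in <<map (Aval A u) (take (index p (Ylist n)) (Ylist n))>>%VS.
Proof.
move=> pY; have p12 : (p.1 < p.2)%N by rewrite -memY.
wlog ab : a b / (a < b)%N.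
  move=> H nab; case: (ltngtP a b) => [ab|ba|/val_inj e]; first exact: H.
    move=> le ne; rewrite Aanti rpredN; apply: H => //; first by rewrite eq_sym.
      by rewrite addnC.
    by apply: contra ne => /orP[] /andP[-> ->]; rewrite ?orbT.
  by rewrite e eqxx in nab.
move=> _ le ne.
have qY : (a, b) \in Ylist n by rewrite memY.
apply: memv_span; apply: (map_f (Aval A u) (x := (a, b))).
apply: ltY_take => //; rewrite /ltY /=.
apply: pow2_lt => //; apply/negP => /andP[/eqP e1 /eqP e2].
by move: ne; rewrite (val_inj e1) (val_inj e2) !eqxx.
Qed.

Lemma main_free : free (WB A u).
Proof.
rewrite /WB /image_mem; set s := enum _.
have us : uniq s by apply: enum_uniq.
suff : free (in_tuple (map (fW A u) s)) by [].
apply/freeP => k Hk i1.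
apply/eqP/negP => /negP ki1.
have [i0 ki0 Hmax] := @arg_maxnP _ i1 (fun i => k i != 0) (fun i => wt (nth set0 s i)) ki1.
have i0s : (i0 < size s)%N by rewrite -(size_map (fW A u)).
set X := nth set0 s i0.
have : X \in calW A u by rewrite -mem_enum; apply: mem_nth.
rewrite inE => /andP[/eqP X3 /hasP[p pB /andP[p1X p2X]]].
have [pY pn] := (calB_inv).1 p pB.
have p12 : (p.1 < p.2)%N by rewrite -memY.
have p21 : p.2 != p.1 by apply/eqP => e; rewrite e ltnn in p12.
have : (0 < #|X :\ p.1 :\ p.2|)%N.
  have := cardsD1 p.1 X; have := cardsD1 p.2 (X :\ p.1).
  rewrite !inE p1X p2X p21 X3 /=.
  by move=> -> /eqP; rewrite !add1n !eqSS => /eqP <-.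
case/card_gt0P => l; rewrite !inE => /and3P[lp2 lp1 lX].
have [_ /(_ lX) [x [y [/and3P[nxy nxl nyl] mX wX ev]]]] := fW_eval l X3.
have h1 := mX p.1; rewrite p1X (eq_sym p.1 l) (negbTE lp1) orbF in h1.
have h2 := mX p.2; rewrite p2X (eq_sym p.2 l) (negbTE lp2) orbF in h2.
have [fX wX' mX'] : [/\ fW A u X (phl u l) = Aval A u p \/ fW A u X (phl u l) = - Aval A u p,
   wt X = (2 ^ p.1 + 2 ^ p.2 + 2 ^ l)%N &
   forall z, (z \in X) = [|| z == p.1, z == p.2 | z == l]].
  case/orP: (esym h1) => /eqP e1; case/orP: (esym h2) => /eqP e2.
  - by rewrite e1 e2 ltnn in p12.
  - subst x y; split => //; first by left.
  - subst x y; split.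
    + by right; rewrite ev Aanti.
    + by rewrite wX (addnC (2 ^ p.2)%N).
    + by move=> z; rewrite mX; case: (z == p.1); case: (z == p.2).
  - by rewrite e1 e2 ltnn in p12.
set S := (<<map (Aval A u) (take (index p (Ylist n)) (Ylist n))>>%VS).
suff : fW A u X (phl u l) \in S.
  by case: fX => ->; rewrite ?rpredN => H; rewrite H in pn.
have := congr1 (fun f : tensVU U V => f (phl u l)) Hk; rewrite /= sum_lfunE zero_lfunE.
rewrite (bigD1 i0) //= scale_lfunE.
have tn i : (i < size s)%N -> (in_tuple (map (fW A u) s))`_i = fW A u (nth set0 s i).
  by move=> ?; rewrite /= (nth_map set0).
rewrite tn // -/X.
move=> E0.
have RS : (\sum_(i < size (map (fW A u) s) | i != i0) (k i *: (map (fW A u) s)`_i) (phl u l)) \in S.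
  apply: rpred_sum => i ni0; rewrite scale_lfunE.
  have is_ : (i < size s)%N by rewrite -(size_map (fW A u)).
  rewrite (nth_map set0) //.
  case: (eqVneq (k i) 0) => [->|ki]; first by rewrite scale0r rpred0.
  apply: rpredZ; set Xi := nth set0 s i.
  have XiX : Xi != X by rewrite /Xi /X nth_uniq.
  have wle := Hmax i ki.
  have : Xi \in calW A u by rewrite -mem_enum; apply: mem_nth.
  rewrite inE => /andP[/eqP Xi3 _].
  have [H0 H1] := fW_eval l Xi3.
  case: (boolP (l \in Xi)) => lXi; last by rewrite H0 // rpred0.
  have [x' [y' [/and3P[nxy' nxl' nyl'] mXi wXi ->]]] := H1 lXi.
  apply: inS => //.
    by move: wle; rewrite -/Xi -/X wXi wX' /= leq_add2r.
  apply: contra XiX => /orP[] /andP[/eqP e1 /eqP e2]; apply/eqP/setP => z;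
    rewrite mXi mX' e1 e2 //.
  by case: (z == p.1); case: (z == p.2).
move: E0 => /eqP; rewrite addr_eq0 => /eqP E.
have -> : fW A u X (phl u l) = (k i0)^-1 *: (k i0 *: fW A u X (phl u l)).
  by rewrite scalerA mulVf // scale1r.
by rewrite E rpredZ // rpredN.
Qed.
End Main.

Unset Implicit Arguments.
Theorem proposition2p7 (F : fieldType) (U V : vectType F) (A : U -> U -> V)
  (HAl : forall (x : U) (a : F) (y z : U), A (a *: y + z) x = a *: A y x + A z x)
  (HAr : forall (x : U) (a : F) (y z : U), A x (a *: y + z) = a *: A x y + A x z)
  (Halt : forall x : U, A x x = 0)
  (Hspan : forall W : {vspace V}, (forall x y : U, A x y \in W) -> W = fullv)
  (n : nat) (u : n.-tuple U) (Hu : basis_of fullv u) :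
  free (WB A u)
  /\ {in calW A u &, injective (fW A u)}
  /\ (forall w, w \in WB A u -> exists2 X, X \in calW A u & fW A u X = w).
Proof.
have Hfree := main_free HAl HAr Halt (basis_free Hu).
split=> //; split.
  by apply/dinjectiveP; apply: free_uniq Hfree.
by move=> w /imageP[X XW ->]; exists X.
Qed.
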